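(* Suppose there is a norm $\|\cdot\|$ on $\mathbb R^n$ and $L>0$ such that $f$ is $2$-uniformly smooth on $\mathrm{dom}(\Psi)$ with constant $L$. (a) If moreover $\Psi$ is $2$-uniformly convex on $\mathrm{dom}(\Psi)$ with constant $\mu>0$, then $(\mathcal D,\mathrm{gap})$ satisfies the $(2,1)$-growth property with $M=2L/\mu$. (b) If $\Psi=\delta_C$ is the indicator function of a closed convex set $C\subseteq\mathbb R^n$ which is $2$-uniformly convex with constant $\mu>0$, and $\ell:=\inf_{x\in C}\|\nabla f(x)\|^*>0$, then $(\mathcal D,\mathrm{gap})$ satisfies the $(2,1)$-growth property with $M=2L/(\ell\mu)$. Here the $(2,1)$-growth property with constant $M$ means: for all $x\in\mathrm{dom}(\Psi)$, $g=\nabla f(x)$, $s\in\partial\Psi^*(-g)$, $\mathcal D(x,s,\theta)\le\frac{M\theta^2}{2}\mathrm{gap}(x,g)$ for all $\theta\in[0,1]$.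
   Context: Let $f,\Psi:\mathbb{R}^n\to\mathbb{R}\cup\{\infty\}$ be closed proper convex functions such that (A1) $f$ is differentiable on $\mathrm{dom}(\Psi)$, and (A2) for every $x\in\mathrm{dom}(f)$ the set $\arg\min_s\{\langle\nabla f(x),s\rangle+\Psi(s)\}$ is nonempty. $f^*,\Psi^*$ denote convex conjugates; $\arg\min_y\{\langle g,y\rangle+\Psi(y)\}=\partial\Psi^*(-g)$. $D_f(y,x)=f(y)-f(x)-\langle\nabla f(x),y-x\rangle$. $\mathrm{gap}(x,u)=f(x)+\Psi(x)+f^*(u)+\Psi^*(-u)$. $\mathcal{D}(x,s,\theta)=D_f(x+\theta(s-x),x)+\Psi(x+\theta(s-x))-(1-\theta)\Psi(x)-\theta\Psi(s)$. $\|\cdot\|^*$ is the dual norm. $f$ is $q$-uniformly smooth on $C$ with constant $L$ if for all $x,y\in C$, $\theta\in[0,1]$: $f(x+\theta(y-x))\ge(1-\theta)f(x)+\theta f(y)-\frac Lq\theta(1-\theta)\|y-x\|^q$. $\Psi$ is $p$-uniformly convex on $C$ with constant $\mu$ ($p\ge2$) if for all $x,y\in C$, $\theta\in[0,1]$: $\Psi(x+\theta(y-x))\le(1-\theta)\Psi(x)+\theta\Psi(y)-\frac\mu p\theta(1-\theta)\|y-x\|^p$. A closed convex set $C$ is $p$-uniformly convex with constant $\mu$ ($p\ge2$) if for all $x,y\in C$, $\theta\in[0,1]$ and $\|z\|\le1$: $x+\theta(y-x)+\frac\mu p\theta(1-\theta)\|y-x\|^pz\in C$. *)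

(* Defs.v *)
From HB Require Import structures.
From mathcomp Require Import all_boot all_order all_algebra.
From mathcomp Require Import all_classical all_reals.
From mathcomp Require Import ereal topology normedtype sequences.
Set Implicit Arguments. Unset Strict Implicit. Unset Printing Implicit Defensive.
Import Order.TTheory GRing.Theory Num.Theory numFieldNormedType.Exports.
Local Open Scope classical_set_scope.
Local Open Scope ring_scope.

Section Defs.
Variables (R : realType) (n : nat).
Notation V := 'rV[R]_n.

Definition dot (u v : V) : R := \sum_(i < n) u 0 i * v 0 i.

(* sup-norm, used only to express differentiability / limits *)
Definition ninf (h : V) : R := \big[Num.max/0]_(i < n) `|h 0 i|.

Definition is_norm (N : V -> R) : Prop :=
  [/\ forall x, 0 <= N x,
      forall x, N x = 0 -> x = 0,
      forall (a : R) x, N (a *: x) = `|a| * N x &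
      forall x y, N (x + y) <= N x + N y].

Definition dualnorm (N : V -> R) (g : V) : R :=
  sup [set dot g x | x in [set x | N x <= 1]].

Definition vcvg (u : nat -> V) (x : V) : Prop :=
  forall i : 'I_n, (fun k => u k 0 i) @ \oo --> x 0 i.

Definition closed_set (C : set V) : Prop :=
  forall (u : nat -> V) x, (forall k, C (u k)) -> vcvg u x -> C x.

Definition convex_set (C : set V) : Prop :=
  forall (x y : V) (t : R), C x -> C y -> 0 <= t <= 1 -> C (x + t *: (y - x)).

Definition dom (F : V -> \bar R) : set V := [set x | (F x < +oo)%E].

Definition proper_fun (F : V -> \bar R) : Prop :=
  (forall x, F x != -oo%E) /\ exists x, (F x < +oo)%E.

Definition convex_fun (F : V -> \bar R) : Prop :=
  forall (x y : V) (t : R), 0 < t < 1 ->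
    (F (x + t *: (y - x))%R <= (1 - t)%:E * F x + t%:E * F y)%E.

(* closed function: the epigraph {(x,t) | F x <= t} is closed *)
Definition closed_fun (F : V -> \bar R) : Prop :=
  forall (u : nat -> V) (a : nat -> R) x (t : R),
    (forall k, (F (u k) <= (a k)%:E)%E) -> vcvg u x -> a @ \oo --> t ->
    (F x <= t%:E)%E.

Definition has_gradient (F : V -> \bar R) (g : V) (x : V) : Prop :=
  F x \is a fin_num /\
  forall eps : R, 0 < eps -> exists2 d : R, 0 < d &
    forall h : V, ninf h < d ->
      F (x + h)%R \is a fin_num /\
      `|fine (F (x + h)%R) - fine (F x) - dot g h| <= eps * ninf h.

Definition conjf (F : V -> \bar R) (u : V) : \bar R :=
  ereal_sup [set ((dot u x)%:E - F x)%E | x in setT].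

Definition subdiff (F : V -> \bar R) (u : V) (s : V) : Prop :=
  F u \is a fin_num /\ forall v, (F u + (dot s (v - u)%R)%:E <= F v)%E.

Definition indicator (C : set V) : V -> \bar R :=
  fun x => if x \in C then 0%E else +oo%E.

Definition bregman (f : V -> \bar R) (gf : V -> V) (y x : V) : \bar R :=
  (f y - f x - (dot (gf x) (y - x)%R)%:E)%E.

Definition gap (f Psi : V -> \bar R) (x u : V) : \bar R :=
  (f x + Psi x + conjf f u + conjf Psi (- u)%R)%E.

Definition Dcal (f Psi : V -> \bar R) (gf : V -> V) (x s : V) (t : R) : \bar R :=
  let y := x + t *: (s - x) in
  (bregman f gf y x + Psi y - (1 - t)%:E * Psi x - t%:E * Psi s)%E.

Definition unif_smooth (N : V -> R) (q : nat) (C : set V) (f : V -> \bar R) (L : R) : Prop :=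
  forall (x y : V) (t : R), C x -> C y -> 0 <= t <= 1 ->
    ((1 - t)%:E * f x + t%:E * f y - (L / q%:R * t * (1 - t) * N (y - x) ^+ q)%:E
       <= f (x + t *: (y - x))%R)%E.

Definition unif_convex_fun (N : V -> R) (p : nat) (C : set V) (Psi : V -> \bar R) (mu : R) : Prop :=
  forall (x y : V) (t : R), C x -> C y -> 0 <= t <= 1 ->
    (Psi (x + t *: (y - x))%R
       <= (1 - t)%:E * Psi x + t%:E * Psi y - (mu / p%:R * t * (1 - t) * N (y - x) ^+ p)%:E)%E.

Definition unif_convex_set (N : V -> R) (p : nat) (C : set V) (mu : R) : Prop :=
  forall (x y : V) (t : R) (z : V), C x -> C y -> 0 <= t <= 1 -> N z <= 1 ->
    C (x + t *: (y - x) + (mu / p%:R * t * (1 - t) * N (y - x) ^+ p) *: z).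

Definition growth21 (f Psi : V -> \bar R) (gf : V -> V) (M : R) : Prop :=
  forall x, dom Psi x -> forall s, subdiff (conjf Psi) (- gf x)%R s ->
    forall t : R, 0 <= t <= 1 ->
      (Dcal f Psi gf x s t <= (M * t ^+ 2 / 2)%:E * gap f Psi x (gf x))%E.

End Defs.

(* Main.v *)
Require Import Defs.
From HB Require Import structures.
From mathcomp Require Import all_boot all_order all_algebra.
From mathcomp Require Import all_classical all_reals.
From mathcomp Require Import ereal topology normedtype sequences derive.
From mathcomp Require Import ring lra.
Import Order.TTheory GRing.Theory Num.Theory numFieldNormedType.Exports.
Local Open Scope classical_set_scope.
Local Open Scope ring_scope.

Set Implicit Arguments. Unset Strict Implicit.

Section NE.
Variables (R : realType) (n : nat).
Notation V := 'rV[R]_n.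
Variable N : V -> R.
Hypothesis hN : is_norm N.

Lemma N0 : N 0 = 0.
Proof. case: hN => _ _ hZ _. by rewrite -(scale0r (0:V)) hZ normr0 mul0r. Qed.

Lemma NN w : N (- w) = N w.
Proof. case: hN => _ _ hZ _. by rewrite -scaleN1r hZ normrN1 mul1r. Qed.

Lemma Nsum (I : seq 'I_n) (F : 'I_n -> V) :
  N (\sum_(i <- I) F i) <= \sum_(i <- I) N (F i).
Proof.
case: hN => _ _ _ hT.
elim: I => [|a I IH]; first by rewrite !big_nil N0.
rewrite !big_cons; apply: le_trans (hT _ _) _; exact: lerD.
Qed.

Lemma coord_le (w : V) i : `|w 0 i| <= `|w|.
Proof.
rewrite [leRHS]/Num.Def.normr /= mx_normrE; apply/bigmax_geP; right => /=.
by exists (0, i).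
Qed.

Lemma N_upper : exists K, 0 <= K /\ forall w : V, N w <= K * `|w|.
Proof.
case: hN => hge _ hZ _.
exists (\sum_(i < n) N ('e_i : V)); split.
  by apply: sumr_ge0 => i _; apply: hge.
move=> w; rewrite {1}(row_sum_delta w).
apply: le_trans (Nsum _ _) _.
rewrite mulr_suml; apply: ler_sum => i _.
rewrite hZ [X in _ <= X]mulrC; apply: ler_wpM2r; [exact: hge| exact: coord_le].
Qed.

Lemma N_cont : continuous N.
Proof.
have [K [K0 hK]] := N_upper.
case: hN => hge _ hZ hT.
move=> x; apply/(@cvgrPdist_lt _ _ _ _ (nbhs_filter x)) => e e0.
apply/nbhs_ballP; exists (e / (K + 1)); first by apply: divr_gt0 => //; rewrite ltr_wpDl.
move=> y; rewrite -ball_normE /= => hxy.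
have h1 : `|N x - N y| <= N (x - y).
  rewrite ler_norml; apply/andP; split.
  - have := hT (y - x) x; rewrite subrK -(NN (y - x)) opprB; lra.
  - have := hT (x - y) y; rewrite subrK; lra.
apply: le_lt_trans h1 _; apply: le_lt_trans (hK _) _.
have : K * `|x - y| <= K * (e / (K + 1)).
  by apply: ler_wpM2l => //; exact: ltW.
move=> h; apply: le_lt_trans h _.
rewrite mulrA ltr_pdivrMr ?ltr_wpDl //; nra.
Qed.

Lemma N_lower : exists2 c, 0 < c & forall w : V, c * `|w| <= N w.
Proof.
case: hN => hge h0 hZ hT.
have [n0|ngt0] := posnP n.
  exists 1 => // w; rewrite mul1r.
  have -> : w = 0 by apply/rowP => i; have := ltn_ord i; rewrite [X in (_ < X)%N]n0.
  by rewrite normr0.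
pose A := (fun w : V => `|w|) @^-1` [set 1].
have cA : compact A.
  apply: bounded_closed_compact.
    exists 1; split => // M M1 x; rewrite /A /= => ->; exact: ltW.
  apply: preimage_closed; last exact: closed_eq.
  by move=> x _; exact: norm_continuous.
have A0 : A !=set0.
  have w0 : (const_mx 1 : V) != 0.
    apply/eqP => /rowP /(_ (Ordinal ngt0)); rewrite !mxE => /eqP; by rewrite oner_eq0.
  exists (`|const_mx 1 : V|^-1 *: const_mx 1); rewrite /A /=.
  by rewrite normrZ normrV ?unitfE ?normr_eq0 // normr_id mulVf // normr_eq0.
have [c cA' hc] := compact_EVT_min A0 cA (continuous_subspaceT N_cont).
move: cA'; rewrite inE /A /= => c1.
exists (N c).
  rewrite lt_def hge andbT; apply/eqP => /h0 c0.
  by move: c1; rewrite c0 normr0 => /esym/eqP; rewrite oner_eq0.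
move=> w; have [->|w0] := eqVneq w 0; first by rewrite normr0 mulr0 hge.
have wA : (`|w|^-1 *: w) \in A.
  rewrite inE /A /= normrZ normrV ?unitfE ?normr_eq0 // normr_id mulVf //.
  by rewrite normr_eq0.
have := hc _ wA; rewrite hZ normrV ?unitfE ?normr_eq0 // normr_id.
by rewrite ler_pdivlMl ?normr_gt0 // mulrC.
Qed.


Lemma dot_bound (u : V) : exists K, 0 <= K /\ forall w, dot u w <= K * N w.
Proof.
have [c c0 hc] := N_lower.
exists ((\sum_(i < n) `|u 0 i|) / c); split.
  by apply: divr_ge0; [apply: sumr_ge0 => i _|exact: ltW].
move=> w; apply: (@le_trans _ _ ((\sum_(i < n) `|u 0 i|) * `|w|)).
  rewrite /dot mulr_suml; apply: ler_sum => i _.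
  apply: le_trans (ler_norm _) _; rewrite normrM.
  by apply: ler_wpM2l => //; exact: coord_le.
rewrite -mulrA; apply: ler_wpM2l; first by apply: sumr_ge0.
by rewrite ler_pdivlMl // .
Qed.

End NE.

Section Dot.
Variables (R : realType) (n : nat).
Notation V := 'rV[R]_n.
Implicit Types u v w : V.

Lemma dotDr u v w : dot u (v + w) = dot u v + dot u w.
Proof. by rewrite /dot -big_split; apply: eq_bigr => i _; rewrite mxE mulrDr. Qed.
Lemma dotDl u v w : dot (u + v) w = dot u w + dot v w.
Proof. by rewrite /dot -big_split; apply: eq_bigr => i _; rewrite mxE mulrDl. Qed.
Lemma dotZr a u v : dot u (a *: v) = a * dot u v.
Proof. rewrite /dot mulr_sumr; apply: eq_bigr => i _; rewrite mxE; ring. Qed.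
Lemma dotZl a u v : dot (a *: u) v = a * dot u v.
Proof. rewrite /dot mulr_sumr; apply: eq_bigr => i _; rewrite mxE; ring. Qed.
Lemma dotNr u v : dot u (- v) = - dot u v.
Proof. by rewrite -scaleN1r dotZr mulN1r. Qed.
Lemma dotNl u v : dot (- u) v = - dot u v.
Proof. by rewrite -scaleN1r dotZl mulN1r. Qed.
Lemma dotBr u v w : dot u (v - w) = dot u v - dot u w.
Proof. by rewrite dotDr dotNr. Qed.
Lemma dotBl u v w : dot (u - v) w = dot u w - dot v w.
Proof. by rewrite dotDl dotNl. Qed.
Lemma dot0r u : dot u 0 = 0.
Proof. by rewrite /dot big1 // => i _; rewrite mxE mulr0. Qed.
Lemma dotC u v : dot u v = dot v u.
Proof. by rewrite /dot; apply: eq_bigr => i _; rewrite mulrC. Qed.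
Lemma dot_ge0 u : 0 <= dot u u.
Proof. by apply: sumr_ge0 => i _; rewrite -expr2 sqr_ge0. Qed.
Lemma dot_eq0 u : dot u u = 0 -> u = 0.
Proof.
move=> /eqP; rewrite /dot psumr_eq0; last by move=> i _; rewrite -expr2 sqr_ge0.
move=> /allP h; apply/rowP => i; rewrite mxE.
have := h i (mem_index_enum i); rewrite -expr2 sqrf_eq0 => /eqP.
by [].
Qed.
End Dot.

Section Grad.
Variables (R : realType) (n : nat).
Notation V := 'rV[R]_n.
Implicit Types u v w h : V.

Lemma ninf_ge0 h : 0 <= ninf h.
Proof.
rewrite /ninf; apply: (big_ind (fun x => 0 <= x)) => //.
by move=> x y hx hy; rewrite le_max hx.
Qed.

Lemma ninfZ t h : ninf (t *: h) = `|t| * ninf h.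
Proof.
rewrite /ninf (big_morph (fun x => `|t| * x) (fun a b => maxr_pMr a b (normr_ge0 t)) (mulr0 _)).
by apply: eq_bigr => i _; rewrite mxE normrM.
Qed.

Lemma le_eps (a b k : R) : 0 <= k -> (forall e, 0 < e -> a <= b + e * k) -> a <= b.
Proof.
move=> k0 H; apply/ler_addgt0Pr => e e0.
have k1 : 0 < k + 1 by lra.
apply: le_trans (H (e / (k + 1)) _) _; first exact: divr_gt0.
rewrite lerD2l mulrAC ler_pdivrMr //; nra.
Qed.

Lemma dirder (F : V -> \bar R) g x (h : V) eps : has_gradient F g x -> 0 < eps ->
  exists2 t0, 0 < t0 & forall t, 0 < t < t0 ->
    F (x + t *: h) \is a fin_num /\
    `|fine (F (x + t *: h)) - fine (F x) - t * dot g h| <= eps * t * ninf h.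
Proof.
move=> [_ hg] e0; have [d d0 hd] := hg _ e0.
have k1 : 0 < ninf h + 1 by have := ninf_ge0 h; lra.
exists (d / (ninf h + 1)); first exact: divr_gt0.
move=> t /andP[t0 tt0].
have : ninf (t *: h) < d.
  rewrite ninfZ (gtr0_norm t0).
  move: tt0; rewrite ltr_pdivlMr // => tt0.
  have := ninf_ge0 h; nra.
move=> /hd [fin hle]; split => //.
by move: hle; rewrite dotZr ninfZ (gtr0_norm t0) mulrA.
Qed.

Lemma grad_ineq (F : V -> \bar R) g x z :
  convex_fun F -> has_gradient F g x -> F z \is a fin_num ->
  fine (F x) + dot g (z - x) <= fine (F z).
Proof.
move=> cF gF fz; have fx := gF.1.
set h := z - x.
apply: (@le_eps _ _ (ninf h) (ninf_ge0 h)) => e e0.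
have [t0 t00 ht] := @dirder F g x h e gF e0.
set t := Num.min (t0 / 2) (1 / 2).
have tp : 0 < t by rewrite lt_min; apply/andP; split; lra.
have tt0 : t < t0 by rewrite gt_min; apply/orP; left; lra.
have t1 : t < 1 by rewrite gt_min; apply/orP; right; lra.
have := ht t; rewrite tp tt0 => /(_ isT) [fxt hle].
have := cF x z t; rewrite tp t1 => /(_ isT).
rewrite -/h -(fineK fx) -(fineK fz) -(fineK fxt) -!EFinM -EFinD lee_fin.
move: hle; rewrite ler_norml => /andP[hl _] hc.
have : t * (fine (F x) + dot g h) <= t * (fine (F z) + e * ninf h).
  have := ninf_ge0 h; nra.
by rewrite ler_pM2l.
Qed.

Lemma breg_bound (f : V -> \bar R) (N : V -> R) (D : set V) L g x y :
  0 <= L -> unif_smooth N 2 D f L -> D x -> D y ->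
  has_gradient f g x -> f y \is a fin_num ->
  fine (f y) - fine (f x) - dot g (y - x) <= L / 2 * N (y - x) ^+ 2.
Proof.
move=> L0 hs Dx Dy gF fy; have fx := gF.1.
set h := y - x; set Q := N h ^+ 2.
have Q0 : 0 <= Q by rewrite /Q sqr_ge0.
apply: (@le_eps _ _ (ninf h) (ninf_ge0 h)) => e e0.
have [t0 t00 ht] := @dirder f g x h e gF e0.
set t := Num.min (t0 / 2) (1 / 2).
have tp : 0 < t by rewrite lt_min; apply/andP; split; lra.
have tt0 : t < t0 by rewrite gt_min; apply/orP; left; lra.
have t1 : t < 1 by rewrite gt_min; apply/orP; right; lra.
have := ht t; rewrite tp tt0 => /(_ isT) [fxt hle].
have := hs x y t Dx Dy; rewrite (ltW tp) (ltW t1) => /(_ isT).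
rewrite -/h -/Q -(fineK fx) -(fineK fy) -(fineK fxt) -!EFinM -EFinD lee_fin /=.
move: hle; rewrite ler_norml => /andP[_ hr] hc.
have L2 : 0 <= L / 2%:R by rewrite divr_ge0.
have : t * (fine (f y) - fine (f x) - dot g h) <= t * (L / 2 * Q + e * ninf h).
  have := ninf_ge0 h; have tt := ltW tp; have : 0 <= L / 2%:R * t * t * Q by apply: mulr_ge0 => //; apply: mulr_ge0 => //; apply: mulr_ge0.
  nra.
by rewrite ler_pM2l.
Qed.
End Grad.


Unset Implicit Arguments. Set Strict Implicit.

Section Core.
Variables (R : realType) (n : nat).
Notation V := 'rV[R]_n.
Variables (N : V -> R) (f Psi : V -> \bar R) (gf : V -> V) (L c : R).
Hypotheses (hN : is_norm N) (cf : convex_fun f) (pf : proper_fun f)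
  (pPsi : proper_fun Psi)
  (A1 : forall x, dom Psi x -> has_gradient f (gf x) x)
  (L0 : 0 <= L) (hsm : unif_smooth N 2 (dom Psi) f L) (c0 : 0 < c).

Lemma fin_of_dom z : dom Psi z -> Psi z \is a fin_num.
Proof.
rewrite /dom /= => hz; rewrite fin_numE; apply/andP; split.
  exact: pPsi.1.
by rewrite lt_eqF.
Qed.

Lemma conj_grad x g : has_gradient f g x ->
  conjf f g = (dot g x - fine (f x))%:E.
Proof.
move=> gF; have fx := gF.1; apply/eqP; rewrite eq_le; apply/andP; split.
  apply: ge_ereal_sup => _ [z _ <-].
  case Ez: (f z) => [r| |].
  - have := @grad_ineq _ _ f g x z cf gF; rewrite Ez => /(_ isT) /=.
    rewrite dotBr -EFinB lee_fin; lra.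
  - by rewrite /= addeC /= leNye.
  - by have := pf.1 z; rewrite Ez.
apply: ereal_sup_ubound; exists x => //.
by rewrite -(fineK fx) -EFinB.
Qed.

Variables (x s0 : V).
Let g := gf x.
Let m := dot g s0 + fine (Psi s0).
Hypotheses (Dx : dom Psi x) (fs0 : Psi s0 \is a fin_num)
  (hmin : forall z, ((dot g s0)%:E + Psi s0 <= (dot g z)%:E + Psi z)%E)
  (grow : forall z, dom Psi z ->
     c / 2 * N (z - s0) ^+ 2 <= dot g z + fine (Psi z) - m)
  (ppart : forall t, 0 <= t <= 1 -> dom Psi (x + t *: (s0 - x)) /\
     fine (Psi (x + t *: (s0 - x))) - (1 - t) * fine (Psi x)
       - t * fine (Psi s0) <= 0).

Lemma conjPsi : conjf Psi (- g) = (- m)%:E.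
Proof.
apply/eqP; rewrite eq_le; apply/andP; split.
  apply: ge_ereal_sup => _ [z _ <-].
  have := hmin z; rewrite -(fineK fs0).
  case Ez: (Psi z) => [r| |].
  - rewrite -!EFinD !lee_fin /m dotNl; lra.
  - by rewrite /= addeC /= leNye.
  - by have := pPsi.1 z; rewrite Ez.
apply: ereal_sup_ubound; exists s0 => //.
by rewrite -(fineK fs0) -EFinB /m dotNl opprD.
Qed.

Lemma s_eq s : subdiff (conjf Psi) (- g) s -> s = s0.
Proof.
move=> [_ hs]; apply/eqP; rewrite -subr_eq0; apply/negPn/negP => d0.
set d := s - s0.
have dd0 : 0 < dot d d.
  rewrite lt_def dot_ge0 andbT; apply/negP => /eqP /dot_eq0 dz.
  by move: d0; rewrite -/d dz eqxx.
have [K [K0 hK]] := @dot_bound _ _ N hN d.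
set t := c * dot d d / (K ^+ 2 + 1).
have K1 : 0 < K ^+ 2 + 1 by have := sqr_ge0 K; lra.
have tp : 0 < t by rewrite /t divr_gt0 // mulr_gt0.
set v := t *: d - g.
have := hs v; rewrite /v opprK subrK conjPsi dotZr => hv.
have hlt : ((- m + t * dot s d - t * dot d d / 2)%:E < conjf Psi v)%E.
  apply: lt_le_trans hv; rewrite -EFinD lte_fin.
  have : 0 < t * dot d d / 2 by rewrite divr_gt0 // mulr_gt0.
  lra.
have [_ [z _ <-] hz] := ereal_sup_gt hlt.
case Ez: (Psi z) hz => [r| |] hz; last by have := pPsi.1 z; rewrite Ez.
  2: by move: hz; rewrite /= addeC /=.
have Dz : dom Psi z by rewrite /dom /= Ez ltry.
have gz := grow z Dz; rewrite Ez /= in gz.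
move: hz; rewrite -EFinB lte_fin /v (dotDl (t *: d) (- g) z) (dotZl t d z) (dotNl g z) => hz.
have ds : dot s d = dot d s0 + dot d d.
  by rewrite dotC -dotDr [s0 + d]addrC /d subrK.
have hzs := hK (z - s0); rewrite dotBr in hzs.
set Q := N (z - s0) in gz hzs.
have Q0 : 0 <= Q by case: hN => h _ _ _; exact: h.
have key : t * K * Q - c / 2 * Q ^+ 2 <= t ^+ 2 * K ^+ 2 / (2 * c).
  have : 0 <= (c * Q - t * K) ^+ 2 by apply: sqr_ge0.
  move=> h; rewrite ler_pdivlMr ?mulr_gt0 //; nra.
have h1 : t * dot d d / 2 < t ^+ 2 * K ^+ 2 / (2 * c).
  apply: lt_le_trans key.
  have : t * dot d (z - s0) <= t * (K * Q) by rewrite ler_pM2l.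
  rewrite dotBr; nra.
have e1 : t ^+ 2 * K ^+ 2 / (2 * c) = t * dot d d * (K ^+ 2 / (K ^+ 2 + 1)) / 2.
  rewrite /t; field; rewrite ?gt_eqF //.
rewrite e1 in h1.
have P0 : 0 < t * dot d d by rewrite mulr_gt0.
have : K ^+ 2 / (K ^+ 2 + 1) < 1 by rewrite ltr_pdivrMr // mul1r; lra.
move: h1; set q := K ^+ 2 / (K ^+ 2 + 1); set P := t * dot d d => h1 hq.
have : P * q < P * 1 by rewrite ltr_pM2l.
lra.
Qed.

Lemma core_bound s : subdiff (conjf Psi) (- g) s -> forall t, 0 <= t <= 1 ->
  (Dcal f Psi gf x s t <= ((2 * L / c) * t ^+ 2 / 2)%:E * gap f Psi x g)%E.
Proof.
move=> /s_eq -> t t01.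
have [Dy hp] := ppart t t01.
set y := x + t *: (s0 - x) in Dy hp *.
have gx := A1 x Dx; have fx := gx.1.
have fy := (A1 _ Dy).1.
have fPx := fin_of_dom x Dx; have fPy := fin_of_dom _ Dy.
have hb := breg_bound L0 hsm Dx Dy gx fy.
have yx : y - x = t *: (s0 - x) by rewrite /y addrC addKr.
rewrite yx in hb.
case: hN => hge _ hZ _.
rewrite hZ ger0_norm ?(andP t01).1 // exprMn in hb.
have G := grow x Dx.
rewrite -(opprB s0 x) -scaleN1r hZ normrN1 mul1r in G.
rewrite /gap (conj_grad x (gf x) gx) conjPsi /Dcal /bregman -/y -/g yx.
rewrite -(fineK fx) -(fineK fy) -(fineK fPx) -(fineK fPy) -(fineK fs0).
rewrite -!EFinM -?EFinB -?EFinD -?EFinB -?EFinD -?EFinB -?EFinD lee_fin /=.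
set Q := N (s0 - x) in hb G *.
have Q0 : 0 <= Q := hge _.
rewrite -/g in hb.
have t0 : 0 <= t := (andP t01).1.
have : L / 2 * (t ^+ 2 * Q ^+ 2) <= 2 * L / c * t ^+ 2 / 2 * (dot g x + fine (Psi x) - m).
  apply: (@le_trans _ _ (2 * L / c * t ^+ 2 / 2 * (c / 2 * Q ^+ 2))).
    rewrite le_eqVlt; apply/orP; left; apply/eqP; field.
    by rewrite gt_eqF.
  apply: ler_wpM2l => //.
  by rewrite !mulr_ge0 ?invr_ge0 ?sqr_ge0 // ltW.

rewrite dotZr.
have -> : fine (f x) + fine (Psi x) + (dot g x - fine (f x)) - m = dot g x + fine (Psi x) - m by ring.
rewrite dotZr in hb; lra.
Qed.

End Core.

Section Fin.
Variables (R : realType) (n : nat).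
Notation V := 'rV[R]_n.

Lemma lim_sq (A B : R) : (forall t, 0 < t < 1 -> t ^+ 2 * A <= B) -> A <= B.
Proof.
move=> H; have h2 := H (1/2) ltac:(apply/andP; split; lra).
case: (leP A 0) => A0; first nra.
case: (leP A B) => // BA.
have B0 : 0 < B by nra.
set t := (A + B) / (2 * A).
have ht : 0 < t < 1.
  apply/andP; split; first by rewrite /t divr_gt0 //; lra.
  by rewrite /t ltr_pdivrMr; lra.
have := H t ht.
have -> : t ^+ 2 * A = (A + B) ^+ 2 / (4 * A) by rewrite /t; field; lra.
rewrite ler_pdivrMr; last lra.
nra.
Qed.

Lemma get_min (f Psi : V -> \bar R) (gf : V -> V) x :
  proper_fun Psi ->
  (forall x, dom Psi x -> has_gradient f (gf x) x) ->
  (forall x g, dom f x -> has_gradient f g x ->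
     exists s, forall s', ((dot g s)%:E + Psi s <= (dot g s')%:E + Psi s')%E) ->
  dom Psi x ->
  exists s0, Psi s0 \is a fin_num /\
    forall z, ((dot (gf x) s0)%:E + Psi s0 <= (dot (gf x) z)%:E + Psi z)%E.
Proof.
move=> pP A1 A2 Dx.
have gx := A1 x Dx.
have dfx : dom f x by rewrite /dom /= ltey; have := gx.1; rewrite fin_numE => /andP[_ ->].
have [s0 hs0] := A2 x (gf x) dfx gx.
exists s0; split => //.
rewrite fin_numE pP.1 /=; apply/eqP => E.
have := hs0 x; rewrite E /=.
have : Psi x \is a fin_num.
  by rewrite fin_numE pP.1 /=; move: Dx; rewrite /dom /= => /lt_eqF ->.
by move=> /fineK <-; rewrite -EFinD addeC /= leye_eq.
Qed.

Lemma finD (Psi : V -> \bar R) z : proper_fun Psi -> dom Psi z -> Psi z \is a fin_num.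
Proof.
move=> pP; rewrite /dom /= => hz; rewrite fin_numE pP.1 /=.
by rewrite lt_eqF.
Qed.

Lemma part_a (N : V -> R) (f Psi : V -> \bar R) (gf : V -> V) (L mu : R) :
  is_norm N -> convex_fun f -> proper_fun f -> proper_fun Psi ->
  (forall x, dom Psi x -> has_gradient f (gf x) x) ->
  (forall x g, dom f x -> has_gradient f g x ->
     exists s, forall s', ((dot g s)%:E + Psi s <= (dot g s')%:E + Psi s')%E) ->
  0 < L -> unif_smooth N 2 (dom Psi) f L ->
  0 < mu -> unif_convex_fun N 2 (dom Psi) Psi mu ->
  growth21 f Psi gf (2 * L / mu).
Proof.
move=> hN cf pf pP A1 A2 L0 hsm mu0 huc x Dx s hs t t01.
have [s0 [fs0 hmin]] := @get_min f Psi gf x pP A1 A2 Dx.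
have Ds0 : dom Psi s0 by rewrite /dom /= ltey; move: fs0; rewrite fin_numE => /andP[].
have hge : forall w, 0 <= N w by case: hN.
apply: (@core_bound R n N f Psi gf L mu hN cf pf pP A1 (ltW L0) hsm mu0 x s0 Dx fs0 hmin _ _ s hs t t01).
- move=> z Dz; apply: lim_sq => th /andP[th0 th1].
  have th01 : 0 <= th <= 1 by rewrite (ltW th0) (ltW th1).
  have := huc z s0 th Dz Ds0 th01.
  set q := z + th *: (s0 - z) => hu.
  have hm := hmin q.
  have fz := @finD Psi z pP Dz.
  have fq : Psi q \is a fin_num.
    rewrite fin_numE pP.1 /=; apply/eqP => E; move: hu; rewrite E.
    by rewrite -(fineK fz) -(fineK fs0) -!EFinM -?EFinB -?EFinD -?EFinB -?EFinD leye_eq.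
  move: hu hm; rewrite -(fineK fz) -(fineK fs0) -(fineK fq).
  rewrite -!EFinM -?EFinB -?EFinD -?EFinB -?EFinD !lee_fin /=.
  rewrite /q dotDr dotZr dotBr -(opprB s0 z) (NN hN).

  set K := N (s0 - z) ^+ 2.
  have K0 : 0 <= K by rewrite /K sqr_ge0.
  move=> hu hm.
  set phi := _ - _.
  have h : (1 - th) * (mu / 2 * K * th) <= (1 - th) * phi.
    rewrite /phi; nra.
  rewrite ler_pM2l in h; last lra.
  apply: le_trans h; have a0 : 0 <= mu / 2 * K by rewrite mulr_ge0 // divr_ge0 // ltW.
  move: a0; set a := mu / 2 * K => a0.
  have : 0 <= a * th * (1 - th) by rewrite mulr_ge0 ?mulr_ge0 // ?subr_ge0 ltW.
  nra.
- move=> th th01.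
  have := huc x s0 th Dx Ds0 th01.
  set y := x + th *: (s0 - x) => hu.
  have fx := @finD Psi x pP Dx.
  have fy : Psi y \is a fin_num.
    rewrite fin_numE pP.1 /=; apply/eqP => E; move: hu; rewrite E.
    by rewrite -(fineK fx) -(fineK fs0) -!EFinM -?EFinB -?EFinD -?EFinB -?EFinD leye_eq.
  split; first by rewrite /dom /= ltey; move: fy; rewrite fin_numE => /andP[].
  move: hu; rewrite -(fineK fx) -(fineK fs0) -(fineK fy).
  rewrite -!EFinM -?EFinB -?EFinD -?EFinB -?EFinD !lee_fin /=.
  have : 0 <= mu / 2%:R * th * (1 - th) * N (s0 - x) ^+ 2.
    case/andP: th01 => ? ?.
    apply: mulr_ge0; last exact: sqr_ge0.
    apply: mulr_ge0; last lra.
    by apply: mulr_ge0 => //; apply: divr_ge0 => //; exact: ltW.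
  lra.
Qed.

Lemma domI (C : set V) z : dom (indicator C) z <-> C z.
Proof.
rewrite /dom /indicator /=; split.
  by case: ifPn => [/set_mem //|_]; rewrite ltxx.
by move=> Cz; rewrite mem_set.
Qed.

Lemma indI (C : set V) z : C z -> indicator C z = 0%E.
Proof. by move=> Cz; rewrite /indicator mem_set. Qed.

Lemma dn_props (N : V -> R) g : is_norm N ->
  let E := [set dot g w | w in [set w | N w <= 1]] in
  E !=set0 /\ has_ubound E /\ 0 <= sup E.
Proof.
move=> hN E.
have E0 : E 0 by exists 0; rewrite /= ?(N0 hN) // dot0r.
have [K [K0 hK]] := dot_bound hN g.
have ub : has_ubound E.
  exists K => _ [w /= Nw <-]; apply: le_trans (hK w) _.
  by rewrite -{2}(mulr1 K) ler_wpM2l.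
split; first by exists 0.
split => //; exact: ub_le_sup.
Qed.

Lemma part_b (N : V -> R) (f : V -> \bar R) (C : set V) (gf : V -> V) (L mu : R) :
  is_norm N -> convex_fun f -> proper_fun f -> proper_fun (indicator C) ->
  (forall x, dom (indicator C) x -> has_gradient f (gf x) x) ->
  (forall x g, dom f x -> has_gradient f g x ->
     exists s, forall s', ((dot g s)%:E + indicator C s <= (dot g s')%:E + indicator C s')%E) ->
  0 < L -> unif_smooth N 2 (dom (indicator C)) f L ->
  convex_set C -> 0 < mu -> unif_convex_set N 2 C mu ->
  0 < inf [set dualnorm N (gf x) | x in C] ->
  growth21 f (indicator C) gf (2 * L / (inf [set dualnorm N (gf x) | x in C] * mu)).
Proof.
move=> hN cf pf pP A1 A2 L0 hsm cvC mu0 hucs.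
set ell := inf _ => ell0 x Dx s hs t t01.
have [s0 [fs0 hmin]] := @get_min f (indicator C) gf x pP A1 A2 Dx.
have Ds0 : dom (indicator C) s0 by rewrite /dom /= ltey; move: fs0; rewrite fin_numE => /andP[].
have Cs0 := (domI C s0).1 Ds0.
have Cx := (domI C x).1 Dx.
have hge : forall w, 0 <= N w by case: hN.
have c0 : 0 < ell * mu by rewrite mulr_gt0.
set g := gf x in hmin hs *.
have ell_dn : ell <= dualnorm N g.
  apply: ge_inf; last by exists x.
  exists 0 => _ [y _ <-]; have [_ [_ h]] := @dn_props N (gf y) hN; exact: h.
have [E0 [Eub _]] := @dn_props N g hN.
apply: (@core_bound R n N f (indicator C) gf L (ell * mu) hN cf pf pP A1 (ltW L0) hsm c0 x s0 Dx fs0 hmin _ _ s hs t t01).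
- move=> z /(domI C z) Cz; rewrite (@indI C _ Cz) (@indI C _ Cs0) /= addr0 addr0.
  apply: lim_sq => th /andP[th0 th1].
  have th01 : 0 <= th <= 1 by rewrite (ltW th0) (ltW th1).
  have rlt : th * ell < sup [set dot g w | w in [set w | N w <= 1]].
    apply: lt_le_trans ell_dn; rewrite gtr_pMl //.
  have [_ [w' /= Nw' <-] hw'] := sup_gt E0 rlt.
  have Nw : N (- w') <= 1 by rewrite (NN hN).
  have := hucs z s0 th (- w') Cz Cs0 th01 Nw.
  set p := _ + _ + _ => Cp.
  have := hmin p; rewrite (@indI C _ Cp) (@indI C _ Cs0) !adde0 lee_fin.
  rewrite /p !dotDr dotZr dotBr dotZr dotNr -(opprB s0 z) (NN hN).
  set K := N (s0 - z) ^+ 2.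
  have K0 : 0 <= K by rewrite /K sqr_ge0.
  move=> hm.
  have kap : 0 <= mu / 2%:R * th * (1 - th) * K.
    rewrite mulr_ge0 // mulr_ge0 ?subr_ge0 ?(ltW th1) // mulr_ge0 ?(ltW th0) //.
    by rewrite divr_ge0 // ltW.
  have h1 : mu / 2%:R * th * (1 - th) * K * (th * ell) <= mu / 2%:R * th * (1 - th) * K * dot g w'.
    by rewrite ler_wpM2l // ltW.
  have h : (1 - th) * (mu / 2 * K * th * th * ell) <= (1 - th) * (dot g z - dot g s0).
    nra.
  rewrite ler_pM2l in h; last lra.
  apply: le_trans h; rewrite le_eqVlt; apply/orP; left; apply/eqP; ring.
- move=> th th01.
  have Cy := cvC x s0 th Cx Cs0 th01.
  split; first exact/(domI C).
  by rewrite (@indI C _ Cy) (@indI C _ Cx) (@indI C _ Cs0) /= !mulr0 !subr0.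
Qed.

End Fin.

Theorem proposition3 (R : realType) (n : nat) (N : 'rV[R]_n -> R)
  (f Psi : 'rV[R]_n -> \bar R) (gf : 'rV[R]_n -> 'rV[R]_n) (L : R) :
  (* standing assumptions: f, Psi closed proper convex *)
  closed_fun f -> proper_fun f -> convex_fun f ->
  closed_fun Psi -> proper_fun Psi -> convex_fun Psi ->
  (* (A1): f differentiable on dom Psi, with gradient gf *)
  (forall x, dom Psi x -> has_gradient f (gf x) x) ->
  (* (A2): argmin_s <grad f(x), s> + Psi(s) nonempty for x in dom f *)
  (forall x g, dom f x -> has_gradient f g x ->
     exists s, forall s', ((dot g s)%:E + Psi s <= (dot g s')%:E + Psi s')%E) ->
  is_norm N -> 0 < L -> unif_smooth N 2 (dom Psi) f L ->
  (* (a) *)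
  (forall mu : R, 0 < mu -> unif_convex_fun N 2 (dom Psi) Psi mu ->
     growth21 f Psi gf (2 * L / mu)) /\
  (* (b) *)
  (forall (C : set 'rV[R]_n) (mu : R),
     closed_set C -> convex_set C -> Psi = indicator C ->
     0 < mu -> unif_convex_set N 2 C mu ->
     let ell := inf [set dualnorm N (gf x) | x in C] in
     0 < ell ->
     growth21 f Psi gf (2 * L / (ell * mu))).
Proof.
move=> _ pf cf _ pP _ A1 A2 hN L0 hsm; split.
  move=> mu mu0 huc; exact: (@part_a R n N f Psi gf L mu hN cf pf pP A1 A2 L0 hsm mu0 huc).
move=> C mu _ cvC EP mu0 hucs ell ell0; subst Psi.
exact: (@part_b R n N f C gf L mu hN cf pf pP A1 A2 L0 hsm cvC mu0 hucs ell0).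
Qed.
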